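(* In the standing setting, define $g^v$ for $t\in\{1,\dots,\overline R\}$, $k\in\{0,\dots,m\}$, $\delta\in\{0,\dots,N\}$ by $g^v(t,k,\delta)=v(k)-kp_{t-1}$ if $k+\delta\le m$; $g^v(t,k,\delta)=\max_{0\le u\le k\wedge\sigma^v(t)}\sum_{\delta'}K_t(\delta'\mid\delta)\,g^v(t+1,u,\delta')$ if $t<\overline R$ and $k+\delta>m$; $g^v(t,k,\delta)=0$ if $t=\overline R$ and $k+\delta>m$; and $g^v(0,k)=\max_{0\le u\le k}\sum_{\delta'}\mathbb P(\delta(p_0)=\delta')\,g^v(1,u,\delta')$. Then $\varphi^v(0,k)=g^v(0,k)$ for all $k\in\{0,\dots,m\}$, and for all $t\in\{1,\dots,\overline R\}$, $k\in\{0,\dots,m\}$, $\delta\in\{0,\dots,N\}$, $$\varphi^v(t,k,\delta)\le g^v\big(t,k\wedge\sigma^v(t-1),\delta\big)\le\varphi^v\big(t,k\wedge\sigma^v(t-1),\delta\big).$$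
   Context: Standing setting. Integers $n\ge2$, $m\ge1$; $N:=(n-1)m$. Reals $p_{\mathrm{init}}\ge0$, $\Delta P>0$; the price at round $t\ge0$ is $p_t:=p_{\mathrm{init}}+t\Delta P$. The player's valuation $v:\{0,\dots,m\}\to[0,\infty)$ satisfies $v(0)=0$ and is non-decreasing and concave. $\overline R:=\lceil (v(1)-p_{\mathrm{init}})/\Delta P\rceil$, assumed $\ge1$. For $t\ge0$, $\sigma^v(t):=\min\operatorname{argmax}_{0\le u\le m}(v(u)-up_t)$. The opponent is given by random variables $Z_1\ge Z_2\ge\dots\ge Z_N\ge0$ (a.s.) on a probability space $(\Omega,\mathcal F,\mathbb P)$; its demand at price $p$ is $\delta(p):=\sum_{j=1}^N\mathbf 1\{Z_j>p\}$. For $t\ge1$ fix transition kernels $K_t(\delta'\mid\delta)$ ($\delta,\delta'\in\{0,\dots,N\}$), each $K_t(\cdot\mid\delta)$ a probability on $\{0,\dots,\delta\}$, with $K_t(\delta'\mid\delta)=\mathbb P(\delta(p_t)=\delta'\mid\delta(p_{t-1})=\delta)$ whenever $\mathbb P(\delta(p_{t-1})=\delta)>0$. Value function: for $t\in\{1,\dots,\overline R\}$, $k\in\{0,\dots,m\}$, $\delta\in\{0,\dots,N\}$: $\varphi^v(t,k,\delta):=v(k)-kp_{t-1}$ if $k+\delta\le m$; $:=\max_{0\le u\le k}\sum_{\delta'=0}^N K_t(\delta'\mid\delta)\varphi^v(t+1,u,\delta')$ if $k+\delta>m$ and $t<\overline R$; $:=0$ if $k+\delta>m$ and $t=\overline R$.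 Also $\varphi^v(0,k):=\max_{0\le u\le k}\sum_{\delta'}\mathbb P(\delta(p_0)=\delta')\varphi^v(1,u,\delta')$. $a\wedge b:=\min(a,b)$. *)

(* Defs.v *)
From HB Require Import structures.
From mathcomp Require Import all_boot all_order all_algebra.
From mathcomp Require Import all_classical all_reals all_analysis.
Set Implicit Arguments. Unset Strict Implicit. Unset Printing Implicit Defensive.
Import Order.TTheory GRing.Theory Num.Theory.
Local Open Scope ring_scope.

Section Defs.
Variable R : realType.

Definition price (pinit dP : R) (t : nat) : R := pinit + t%:R * dP.

Definition maxupto (k : nat) (F : nat -> R) : R :=
  \big[Num.max/F 0%N]_(0 <= u < k.+1) F u.

Definition Rbar (v : nat -> R) (pinit dP : R) : nat :=
  `|Num.ceil ((v 1%N - pinit) / dP)|%N.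

(* sigma^v(t) = min argmax_{0<=u<=m} (v(u) - u p_t) *)
Definition sigmav (m : nat) (v : nat -> R) (pinit dP : R) (t : nat) : nat :=
  let f := fun u : nat => v u - u%:R * price pinit dP t in
  find (fun u => all (fun w => f w <= f u) (iota 0 m.+1)) (iota 0 m.+1).

Definition demand (T : Type) (N : nat) (Z : nat -> T -> R) (p : R) (w : T) : nat :=
  (\sum_(1 <= j < N.+1) (((p < Z j w)%R : bool) : nat))%N.

(* value function phi^v(t,k,delta), by recursion on the remaining fuel Rbar - t.
   K t d' d stands for K_t(d' | d). *)
Fixpoint phi_rec (m N : nat) (v : nat -> R) (pinit dP : R)
    (K : nat -> nat -> nat -> R) (fuel t k d : nat) : R :=
  if (k + d <= m)%N then v k - k%:R * price pinit dP t.-1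
  else match fuel with
       | 0%N => 0
       | fuel'.+1 => maxupto k (fun u =>
            \sum_(d' < N.+1) K t d' d * phi_rec m N v pinit dP K fuel' t.+1 u d')
       end.

Definition phi m N v pinit dP K (t k d : nat) : R :=
  phi_rec m N v pinit dP K (Rbar v pinit dP - t) t k d.

Fixpoint g_rec (m N : nat) (v : nat -> R) (pinit dP : R)
    (K : nat -> nat -> nat -> R) (fuel t k d : nat) : R :=
  if (k + d <= m)%N then v k - k%:R * price pinit dP t.-1
  else match fuel with
       | 0%N => 0
       | fuel'.+1 => maxupto (minn k (sigmav m v pinit dP t)) (fun u =>
            \sum_(d' < N.+1) K t d' d * g_rec m N v pinit dP K fuel' t.+1 u d')
       end.

Definition gv m N v pinit dP K (t k d : nat) : R :=
  g_rec m N v pinit dP K (Rbar v pinit dP - t) t k d.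

End Defs.

(* Main.v *)
Require Import Defs.
From HB Require Import structures.
From mathcomp Require Import all_boot all_order all_algebra.
From mathcomp Require Import all_classical all_reals all_analysis.
From mathcomp Require Import ring lra.
Import Order.TTheory GRing.Theory Num.Theory.
Set Implicit Arguments. Unset Strict Implicit.
Local Open Scope classical_set_scope.
Local Open Scope ring_scope.

Lemma bigmax_seq_le (R : realType) (r : seq nat) (x : R) (F : nat -> R) (c : R) :
  x <= c -> (forall u, u \in r -> F u <= c) -> \big[Num.max/x]_(u <- r) F u <= c.
Proof.
move=> hx; elim: r => [|a r IH] H; first by rewrite big_nil.
rewrite big_cons ge_max H ?mem_head // IH // => u hu; apply: H.
by rewrite in_cons hu orbT.
Qed.

Lemma le_bigmax_seq (R : realType) (r : seq nat) (x : R) (F : nat -> R) u :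
  u \in r -> F u <= \big[Num.max/x]_(u <- r) F u.
Proof.
elim: r => [|a r IH] //; rewrite in_cons big_cons le_max => /orP [/eqP ->|/IH ->].
  by rewrite lexx.
by rewrite orbT.
Qed.

Lemma maxupto_le (R : realType) (k : nat) (F : nat -> R) (c : R) :
  (forall u, (u <= k)%N -> F u <= c) -> maxupto k F <= c.
Proof.
move=> H; apply: bigmax_seq_le; first exact: H.
by move=> u; rewrite mem_index_iota ltnS => /andP [_ /H].
Qed.

Lemma le_maxupto (R : realType) (k u : nat) (F : nat -> R) :
  (u <= k)%N -> F u <= maxupto k F.
Proof. by move=> H; apply: le_bigmax_seq; rewrite mem_index_iota ltnS H. Qed.

Lemma sigma_prop (R : realType) m (v : nat -> R) pinit dP s :
  (sigmav m v pinit dP s <= m)%N /\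
  forall w, (w <= m)%N -> v w - w%:R * price pinit dP s <=
     v (sigmav m v pinit dP s) - (sigmav m v pinit dP s)%:R * price pinit dP s.
Proof.
set f := fun u : nat => v u - u%:R * price pinit dP s.
set a := (fun u => all (fun w => f w <= f u) (iota 0 m.+1)).
have ex : exists2 u, (u <= m)%N & forall w, (w <= m)%N -> f w <= f u.
  elim: m {a} => [|m [u hu H]].
    by exists 0%N => // w; rewrite leqn0 => /eqP ->.
  have [le|lt] := leP (f m.+1) (f u).
    exists u; first exact: leqW.
    move=> w; rewrite leq_eqVlt => /orP [/eqP ->//|]; rewrite ltnS; exact: H.
  exists m.+1 => // w; rewrite leq_eqVlt => /orP [/eqP ->//|]; rewrite ltnS => hw.
  exact: le_trans (H _ hw) (ltW lt).
have hs : has a (iota 0 m.+1).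
  case: ex => u hu H; apply/hasP; exists u; first by rewrite mem_iota.
  by apply/allP => w; rewrite mem_iota add0n ltnS => /andP [_ /H].
have := nth_find 0%N hs; have := hs; rewrite has_find size_iota => hf.
rewrite nth_iota // add0n /sigmav -/f -/a.
move=> /allP Hall; split; first by rewrite -ltnS.
by move=> w hw; apply: Hall; rewrite mem_iota add0n ltnS.
Qed.

Lemma sigma_mono (R : realType) m (v : nat -> R) pinit dP s :
  0 < dP -> (sigmav m v pinit dP s.+1 <= sigmav m v pinit dP s)%N.
Proof.
move=> hdP.
have [h1 H1] := sigma_prop m v pinit dP s.
have [h2 H2] := sigma_prop m v pinit dP s.+1.
set a := sigmav m v pinit dP s in h1 H1 H2 *.
set b := sigmav m v pinit dP s.+1 in h2 H1 H2 *.
rewrite leqNgt; apply/negP => lt.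
have := H2 a h1; have := H1 b h2.
rewrite /price -[s.+1]addn1 natrD mulrDl mul1r.
have : a%:R * dP < b%:R * dP by rewrite ltr_pM2r // ltr_nat.
set pa := a%:R; set pb := b%:R.
move=> hlt h h'.
have e1 : pb * (pinit + (s%:R * dP + dP)) = pb * (pinit + s%:R * dP) + pb * dP by ring.
have e2 : pa * (pinit + (s%:R * dP + dP)) = pa * (pinit + s%:R * dP) + pa * dP by ring.
move: h'; rewrite e1 e2 => h'.
lra.
Qed.

Definition Kok (R : realType) (N : nat) (K : nat -> nat -> nat -> R) :=
  forall t dl, (1 <= t)%N -> (dl <= N)%N ->
     (forall dl', 0 <= K t dl' dl) /\
     (forall dl', (dl < dl')%N -> K t dl' dl = 0) /\
     \sum_(dl' < dl.+1) K t dl' dl = 1.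

Lemma big_mkord_true_helper (R : realType) n (F : nat -> R) :
  \sum_(i < n) F i = \sum_(0 <= i < n) F i.
Proof. by rewrite big_mkord. Qed.

Lemma sumK (R : realType) N (K : nat -> nat -> nat -> R) t dl :
  Kok N K -> (1 <= t)%N -> (dl <= N)%N -> \sum_(d' < N.+1) K t d' dl = 1.
Proof.
move=> hK ht hd; have [_ [h0 h1]] := hK t dl ht hd.
rewrite (@big_mkord_true_helper _ _ (fun i => K t i dl)) (big_cat_nat _ (n := dl.+1)) //= -(@big_mkord_true_helper _ _ (fun i => K t i dl)) h1.
rewrite big_nat_cond big1 ?addr0 // => i /andP [/andP [hi _] _]; exact: h0.
Qed.

Lemma sumK_mono (R : realType) N (K : nat -> nat -> nat -> R) t dl (x y : nat -> R) :
  Kok N K -> (1 <= t)%N -> (dl <= N)%N -> (forall i, (i <= N)%N -> x i <= y i) ->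
  \sum_(d' < N.+1) K t d' dl * x d' <= \sum_(d' < N.+1) K t d' dl * y d'.
Proof.
move=> hK ht hd H; apply: ler_sum => i _; apply: ler_wpM2l.
  by have [h _] := hK t dl ht hd.
by apply: H; rewrite -ltnS.
Qed.

Lemma sumK_le (R : realType) N (K : nat -> nat -> nat -> R) t dl (x : nat -> R) B :
  Kok N K -> (1 <= t)%N -> (dl <= N)%N -> (forall i, (i <= N)%N -> x i <= B) ->
  \sum_(d' < N.+1) K t d' dl * x d' <= B.
Proof.
move=> hK ht hd H; apply: le_trans (sumK_mono (y := fun _ => B) hK ht hd H) _.
by rewrite -mulr_suml (sumK hK ht hd) mul1r.
Qed.

Lemma phi_bound (R : realType) m N (v : nat -> R) pinit dP K fuel :
  Kok N K -> 0 < dP -> v 0%N = 0 ->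
  forall t k dl, (1 <= t)%N -> (dl <= N)%N ->
  phi_rec m N v pinit dP K fuel t k dl <=
    v (sigmav m v pinit dP t.-1) - (sigmav m v pinit dP t.-1)%:R * price pinit dP t.-1.
Proof.
move=> hK hdP hv0; elim: fuel => [|f IH] t k dl ht hd /=.
- have [_ H] := sigma_prop m v pinit dP t.-1.
  case: ifP => hk; first by apply: H; apply: leq_trans hk; apply: leq_addr.
  by have := H 0%N isT; rewrite hv0 mul0r subr0.
- have [hs H] := sigma_prop m v pinit dP t.-1.
  case: ifP => hk; first by apply: H; apply: leq_trans hk; apply: leq_addr.
  apply: maxupto_le => u hu.
  apply: sumK_le => // i hi.
  apply: le_trans (IH t.+1 u i isT hi) _ => /=.
  have [hs' _] := sigma_prop m v pinit dP t.
  apply: (le_trans _ (H _ hs')).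
  rewrite lerD2l lerN2; apply: ler_wpM2l; first exact: ler0n.
  rewrite /price lerD2l; apply: ler_wpM2r; first exact: ltW.
  by rewrite ler_nat leq_pred.
Qed.

Lemma g_le_phi (R : realType) m N (v : nat -> R) pinit dP K fuel :
  Kok N K ->
  forall t k dl, (1 <= t)%N -> (dl <= N)%N ->
  g_rec m N v pinit dP K fuel t k dl <= phi_rec m N v pinit dP K fuel t k dl.
Proof.
move=> hK; elim: fuel => [|f IH] t k dl ht hd /=; case: ifP => // hk.
apply: maxupto_le => u hu.
apply: le_trans (le_maxupto _ (leq_trans hu (geq_minl _ _))).
apply: sumK_mono => // i hi; exact: IH.
Qed.

Lemma phi_le_g (R : realType) m N (v : nat -> R) pinit dP K fuel :
  Kok N K -> 0 < dP -> v 0%N = 0 ->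
  forall t k dl, (1 <= t)%N -> (k <= m)%N -> (dl <= N)%N ->
  phi_rec m N v pinit dP K fuel t k dl <=
    g_rec m N v pinit dP K fuel t (minn k (sigmav m v pinit dP t.-1)) dl.
Proof.
move=> hK hdP hv0; elim: fuel => [|f IH] t k dl ht hkm hd.
- have [hs H] := sigma_prop m v pinit dP t.-1.
  have hkk : (minn k (sigmav m v pinit dP t.-1) <= k)%N by apply: geq_minl.
  have hc : minn k (sigmav m v pinit dP t.-1) = k \/
     (minn k (sigmav m v pinit dP t.-1) = sigmav m v pinit dP t.-1 /\ (sigmav m v pinit dP t.-1 < k)%N).
    case: (leqP k (sigmav m v pinit dP t.-1)) => hks;  first by left.
    by right.
  move: hkk hc; set s0 := sigmav m v pinit dP t.-1 in H hs *.
  move: (minn k s0) => k' hkk hc.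
  rewrite /=; case: ifP => hk.
    rewrite ifT; last by apply: leq_trans hk; rewrite leq_add2r.
    case: hc => [->//|[-> _]]; exact: H.
  case: ifP => // hk'.
  case: hc => [ek|[-> _]]; first by move: hk'; rewrite ek hk.
  by have := H 0%N isT; rewrite hv0 mul0r subr0.
- have [hs H] := sigma_prop m v pinit dP t.-1.
  have hmono := sigma_mono m v pinit t.-1 hdP.
  rewrite prednK // in hmono.
  have hkk : (minn k (sigmav m v pinit dP t.-1) <= k)%N by apply: geq_minl.
  have hc : minn k (sigmav m v pinit dP t.-1) = k \/
     (minn k (sigmav m v pinit dP t.-1) = sigmav m v pinit dP t.-1 /\ (sigmav m v pinit dP t.-1 < k)%N).
    case: (leqP k (sigmav m v pinit dP t.-1)) => hks; first by left.
    by right.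
  have hk's : (minn k (sigmav m v pinit dP t.-1) <= sigmav m v pinit dP t.-1)%N by apply: geq_minr.
  move: hkk hc hk's; set s0 := sigmav m v pinit dP t.-1 in H hs hmono *.
  move: (minn k s0) => k' hkk hc hk's.
  case: (leqP (k + dl) m) => hk.
    rewrite /= hk ifT; last by apply: leq_trans hk; rewrite leq_add2r.
    case: hc => [->//|[-> _]]; exact: H.
  case: (leqP (k' + dl) m) => hk'.
    case: hc => [ek|[ek hks]]; first by move: hk'; rewrite ek leqNgt hk.
    rewrite [X in _ <= X]/= hk' ek.
    exact: phi_bound.
  rewrite /= leqNgt hk leqNgt hk' /=.
  apply: maxupto_le => u hu.
  apply: le_trans (le_maxupto _ (u := minn u (sigmav m v pinit dP t)) _).
    apply: sumK_mono => // i hi; apply: IH => //.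
    exact: leq_trans hu hkm.
  move: hmono hu hc; set a := sigmav m v pinit dP t.
  move=> h1 h2 hc; rewrite !leq_min geq_minr andbT.
  case: hc => [->|[-> _]]; first exact: leq_trans (geq_minl _ _) h2.
  exact: leq_trans (geq_minr _ _) h1.
Qed.
Theorem mainTheorem10 (R : realType) (n m : nat) (pinit dP : R)
  (v : nat -> R) (d : measure_display) (Omega : measurableType d)
  (P : probability Omega R) (Z : nat -> Omega -> R)
  (K : nat -> nat -> nat -> R) :
  let N := ((n - 1) * m)%N in
  let p := price pinit dP in
  let Rb := Rbar v pinit dP in
  let sigma := sigmav m v pinit dP in
  let dem := demand N Z in
  (2 <= n)%N -> (1 <= m)%N ->
  0 <= pinit -> 0 < dP ->
  (* valuation: v(0) = 0, non-decreasing and concave on {0..m} *)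
  v 0%N = 0 ->
  (forall u, (u < m)%N -> v u <= v u.+1) ->
  (forall u, (u.+2 <= m)%N -> v u.+2 - v u.+1 <= v u.+1 - v u) ->
  (* Rbar >= 1 *)
  (1 <= Num.ceil ((v 1%N - pinit) / dP))%R ->
  (* the opponent: measurable Z_1 >= ... >= Z_N >= 0 a.s. *)
  (forall j, measurable_fun setT (Z j)) ->
  {ae P, forall w, (forall j, (1 <= j < N)%N -> Z j.+1 w <= Z j w) /\
                   (forall j, (1 <= j <= N)%N -> 0 <= Z j w)} ->
  (* transition kernels *)
  (forall t dl, (1 <= t)%N -> (dl <= N)%N ->
     (forall dl', 0 <= K t dl' dl) /\
     (forall dl', (dl < dl')%N -> K t dl' dl = 0) /\
     \sum_(dl' < dl.+1) K t dl' dl = 1) ->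
  (forall t dl dl', (1 <= t)%N -> (dl <= N)%N -> (dl' <= N)%N ->
     (0 < P [set w | dem (p t.-1) w = dl])%E ->
     K t dl' dl = fine (P ([set w | dem (p t) w = dl'] `&` [set w | dem (p t.-1) w = dl]))
                  / fine (P [set w | dem (p t.-1) w = dl])) ->
  let phi0 := fun k => maxupto k (fun u =>
        \sum_(dl' < N.+1) fine (P [set w | dem (p 0%N) w = dl']) * phi m N v pinit dP K 1 u dl') in
  let g0 := fun k => maxupto k (fun u =>
        \sum_(dl' < N.+1) fine (P [set w | dem (p 0%N) w = dl']) * gv m N v pinit dP K 1 u dl') in
  (forall k, (k <= m)%N -> phi0 k = g0 k) /\
  (forall t k dl, (1 <= t <= Rb)%N -> (k <= m)%N -> (dl <= N)%N ->
     phi m N v pinit dP K t k dl <= gv m N v pinit dP K t (minn k (sigma t.-1)) dl /\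
     gv m N v pinit dP K t (minn k (sigma t.-1)) dl
       <= phi m N v pinit dP K t (minn k (sigma t.-1)) dl).
Proof.
Proof.
move=> N p Rb sigma dem hn hm hp hdP hv0 hvi hvc hR hZ hae hK hKP phi0 g0.
have hK' : Kok N K := hK.
have hw : forall i, 0 <= fine (P [set w | dem (p 0%N) w = i]).
  by move=> i; apply: fine_ge0; apply: measure_ge0.
split.
  move=> k hk; apply/le_anti/andP; split.
    apply: maxupto_le => u hu.
    apply: le_trans (le_maxupto _ (u := minn u (sigma 0%N)) _); last first.
      exact: leq_trans (geq_minl _ _) hu.
    apply: ler_sum => i _; apply: ler_wpM2l => //.
    apply: phi_le_g => //; [exact: (leq_trans hu hk) | by rewrite -ltnS].
  apply: maxupto_le => u hu.
  apply: le_trans (le_maxupto _ hu).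
  apply: ler_sum => i _; apply: ler_wpM2l => //.
  by apply: g_le_phi => //; rewrite -ltnS.
move=> t k dl /andP [ht _] hk hd; split.
  exact: phi_le_g.
exact: g_le_phi.
Qed.
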